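(* Let $X$ be a Tychonoff space. The following are equivalent: (i) $X$ is almost locally compact; (ii) $X$ contains a dense locally compact subspace; (iii) every open nonempty $U\subset X$ contains an open nonempty relatively compact subset; (iv) the compact-open convergence on $\mathcal{C}(X)$ is stronger than the uo convergence, i.e. every net in $\mathcal C(X)$ converging uniformly on compact subsets of $X$ to $f$ uo-converges to $f$ in the vector lattice $\mathcal C(X)$.
   Context: $\mathcal C(X)$ is the vector lattice of real-valued continuous functions on $X$ with the pointwise order. $X$ is almost locally compact if the set of points of $X$ having a compact neighborhood is dense in $X$. In a vector lattice, a net order converges to $f$ if there is a set $G$ with $\bigwedge G=0$ such that for each $g\in G$ the net is eventually in $[f-g,f+g]$; it uo-converges to $f$ if $|f_\alpha-f|\wedge g$ order converges to $0$ for every $g\ge 0$. *)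

(* Defs.v *)
From HB Require Import structures.
From mathcomp Require Import all_boot all_order all_algebra.
From mathcomp Require Import all_classical all_reals all_analysis.
Set Implicit Arguments. Unset Strict Implicit. Unset Printing Implicit Defensive.
Import Order.TTheory GRing.Theory Num.Theory numFieldNormedType.Exports.
Local Open Scope classical_set_scope.
Local Open Scope ring_scope.

Definition tychonoff_space (X : topologicalType) : Prop :=
  completely_regular_space X /\ hausdorff_space X.

Definition has_compact_nbhd (X : topologicalType) (x : X) : Prop :=
  exists K : set X, compact K /\ nbhs x K.

Definition almost_locally_compact (X : topologicalType) : Prop :=
  dense [set x : X | has_compact_nbhd x].

(* A neighborhood of x in
   the subspace D is a subset of D containing N `&` D for some neighborhood
   N of x in X, and a subset of D is compact in D iff it is compact in X. *)
Definition locally_compact_subspace (X : topologicalType) (D : set X) : Prop :=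
  forall x, D x -> exists K : set X,
    [/\ compact K, K `<=` D & exists2 N, nbhs x N & N `&` D `<=` K].

Definition directed_set (I : Type) (le : I -> I -> Prop) : Prop :=
  [/\ (exists i : I, True),
      (forall i, le i i),
      (forall i j k, le i j -> le j k -> le i k) &
      (forall i j, exists k, le i k /\ le j k)].

Definition eventually_net (I : Type) (le : I -> I -> Prop) (P : I -> Prop) :=
  exists i0, forall i, le i0 i -> P i.

Section CX.
Variables (R : realType) (X : topologicalType).

Definition inf_is_zero_CX (G : set (X -> R)) : Prop :=
  [/\ (forall g, G g -> continuous g),
      (forall g, G g -> forall x, 0 <= g x) &
      (forall h : X -> R, continuous h ->
         (forall g, G g -> forall x, h x <= g x) -> forall x, h x <= 0)].

Definition order_conv_CX (I : Type) (le : I -> I -> Prop)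
    (F : I -> X -> R) (f : X -> R) : Prop :=
  exists G : set (X -> R), inf_is_zero_CX G /\
    forall g, G g -> eventually_net le
      (fun i => forall x, f x - g x <= F i x /\ F i x <= f x + g x).

Definition uo_conv_CX (I : Type) (le : I -> I -> Prop)
    (F : I -> X -> R) (f : X -> R) : Prop :=
  forall g : X -> R, continuous g -> (forall x, 0 <= g x) ->
    order_conv_CX le (fun i x => Order.min `|F i x - f x| (g x)) (fun _ => 0).

Definition compact_open_conv (I : Type) (le : I -> I -> Prop)
    (F : I -> X -> R) (f : X -> R) : Prop :=
  forall K : set X, compact K -> forall eps : R, 0 < eps ->
    eventually_net le (fun i => forall x, K x -> `|F i x - f x| < eps).

Definition compact_open_stronger_than_uo : Prop :=
  forall (I : Type) (le : I -> I -> Prop) (F : I -> X -> R) (f : X -> R),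
    directed_set le -> (forall i, continuous (F i)) -> continuous f ->
    compact_open_conv le F f -> uo_conv_CX le F f.

End CX.

(* Main.v *)
Require Import Defs.
From HB Require Import structures.
From mathcomp Require Import all_boot all_order all_algebra.
From mathcomp Require Import all_classical all_reals all_analysis.
From mathcomp Require Import lra.
Import Order.TTheory GRing.Theory Num.Theory numFieldNormedType.Exports.
Local Open Scope classical_set_scope.
Local Open Scope ring_scope.


Lemma sep_fun (R : realType) (X : topologicalType) :
  completely_regular_space X -> forall (a : X) (B : set X), closed B -> ~ B a ->
  exists phi : X -> R, [/\ continuous phi, (forall x, 0 <= phi x <= 1),
     phi a = 1 & forall b, B b -> phi b = 0].
Proof.
move=> crs a B cB nBa.
have /(@uniform_separatorP _ R) [f [cf f01 fa fB]] := crs a B cB nBa.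
exists (fun x => 1 - f x); split.
- move=> x; apply: cvgB; [exact: cvg_cst | exact: cf].
- move=> x; have := f01 _ (imageT f x); rewrite /= in_itv /= => /andP[h0 h1].
  apply/andP; split; lra.
- have -> : f a = 0 by apply: fa; exists a.
  by rewrite subr0.
- move=> b Bb; have -> : f b = 1 by apply: fB; exists b.
  by rewrite subrr.
Qed.

Lemma nbhs_open_sub (X : topologicalType) (x : X) (N : set X) :
  nbhs x N -> exists Op, [/\ open Op, Op x & Op `<=` N].
Proof. rewrite nbhsE; case=> Op [oO Ox] ON; by exists Op. Qed.
Arguments nbhs_open_sub {X x N}.

Lemma part1 (R : realType) (X : topologicalType) : tychonoff_space X ->
  (almost_locally_compact X <->
        (exists D : set X, dense D /\ locally_compact_subspace D)).
Proof.
move=> [crs hs]; split.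
- move=> dW; exists [set x : X | has_compact_nbhd x]; split => //.
  move=> x [K [cK nK]].
  have [Op [oO Ox OK]] := nbhs_open_sub nK.
  have rg := @completely_regular_regular R X crs.
  have [B nB cBO] := rg x Op (open_nbhs_nbhs (conj oO Ox)).
  exists (closure B); split.
  + apply: (subclosed_compact _ cK); first exact: closed_closure.
    by move=> y /cBO /OK.
  + move=> y /cBO Oy; exists K; split => //.
    by apply: (filterS OK); apply: open_nbhs_nbhs.
  + by exists B => // y [By _]; apply: subset_closure.
- move=> [D [dD lD]] Op O0 oO.
  have [x [Ox Dx]] := dD Op O0 oO.
  have [K [cK KD [N nN NK]]] := lD x Dx.
  have nNO : nbhs x (N `&` Op) by apply: filterI => //; apply: open_nbhs_nbhs.
  have [Oq [oOq Oqx OqNO]] := nbhs_open_sub nNO.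
  exists x; split => //; exists K; split => //.
  apply: (filterS (P := Oq)); last by apply: open_nbhs_nbhs.
  move=> y Oqy; apply: contrapT => nKy.
  have oP : open (Oq `&` ~` K).
    by apply: openI => //; apply: closed_openC; apply: compact_closed.
  have [z [[Oqz nKz] Dz]] := dD _ (ex_intro _ y (conj Oqy nKy)) oP.
  by apply: nKz; apply: NK; split => //; case: (OqNO z Oqz).
Qed.

Lemma part2 (X : topologicalType) : hausdorff_space X ->
  (almost_locally_compact X <->
        (forall U : set X, open U -> (U !=set0) ->
           exists V : set X, [/\ open V, (V !=set0), (V `<=` U) & precompact V])).
Proof.
move=> hs; split.
- move=> dW U oU U0.
  have [x [Ux [K [cK nK]]]] := dW U U0 oU.
  have nUK : nbhs x (U `&` K) by apply: filterI => //; apply: open_nbhs_nbhs.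
  have [V [oV Vx VUK]] := nbhs_open_sub nUK.
  exists V; split => //; first by exists x.
  + by move=> y /VUK [].
  + rewrite precompactE; apply: (subclosed_compact _ cK); first exact: closed_closure.
    rewrite (closure_id K).1; last exact: compact_closed.
    by apply: closureS => y /VUK [].
- move=> H Op O0 oO.
  have [V [oV [x Vx] VO pV]] := H Op oO O0.
  exists x; split; first exact: VO.
  exists (closure V); split; first by rewrite -precompactE.
  apply: (filterS (P := V)); first exact: subset_closure.
  exact: open_nbhs_nbhs.
Qed.

Lemma part3 (R : realType) (X : topologicalType) : tychonoff_space X ->
  (almost_locally_compact X <-> compact_open_stronger_than_uo R X).
Proof.
move=> [crs hs]; split.
- move=> dW I le F f _ Fc fc conv g gc g0.
  have hpos : forall e (phi : X -> R) x, 0 < e -> 0 <= phi x <= 1 ->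
      0 <= e + g x * (1 - phi x).
    move=> e phi x e0 /andP[_ p1]; apply: addr_ge0; first exact: ltW.
    by apply: mulr_ge0 => //; rewrite subr_ge0.
  pose G := [set h : X -> R | exists e (K : set X) (phi : X -> R),
    h = (fun x => e + g x * (1 - phi x)) /\
    [/\ 0 < e, compact K, continuous phi, (forall x, 0 <= phi x <= 1) &
        (forall x, ~ K x -> phi x = 0)]].
  exists G; split.
  + split.
    * move=> h [e [K [phi [-> [e0 cK cphi p01 pK]]]]] x.
      apply: cvgD; first exact: cvg_cst.
      apply: cvgM; first exact: gc.
      by apply: cvgB; [exact: cvg_cst | exact: cphi].
    * by move=> h [e [K [phi [-> [e0 cK cphi p01 pK]]]]] x; apply: hpos.
    * move=> u uc uG x.
      have Wle : forall y, has_compact_nbhd y -> u y <= 0.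
        move=> y [K [cK nK]].
        have [Op [oO Oy OK]] := nbhs_open_sub nK.
        have [phi [cphi p01 py pO]] :=
          @sep_fun R X crs y (~` Op) (open_closedC oO) (fun h => h Oy).
        apply/ler_addgt0Pr => e e0; rewrite add0r.
        have := uG (fun x => e + g x * (1 - phi x)) _ y.
        rewrite py subrr mulr0 addr0; apply.
        exists e, K, phi; split => //; split => //.
        by move=> z nKz; apply: pO => Oz; apply: nKz; exact: OK.
      rewrite leNgt; apply/negP => ux.
      have oP := @open_comp _ _ u [set r | 0 < r] (fun y _ => uc y) (@open_gt R 0).
      have [y [/= uy Wy]] := dW _ (ex_intro _ x ux) oP.
      by have := Wle y Wy; rewrite leNgt uy.
  + move=> h [e [K [phi [-> [e0 cK cphi p01 pK]]]]].
    have [i0 Hi0] := conv K cK e e0.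
    exists i0 => i /Hi0 HK x /=; split.
    * rewrite sub0r; apply: (@le_trans _ _ 0).
        by rewrite oppr_le0; apply: hpos.
      by rewrite le_min normr_ge0 g0.
    * rewrite add0r; case: (pselect (K x)) => Kx.
      - rewrite ge_min; apply/orP; left.
        apply: (le_trans (ltW (HK x Kx))); rewrite lerDl.
        by apply: mulr_ge0 => //; case/andP: (p01 x) => _ p1; rewrite subr_ge0.
      - rewrite pK // subr0 mulr1 ge_min; apply/orP; right.
        by rewrite lerDr; exact: ltW.
- move=> Hconv; apply: contrapT => ndW.
  have [Op [[x0 [oO Ox0]] OW]] := denseNE ndW.
  have [g [gc g01 gx0 gO]] :=
    @sep_fun R X crs x0 (~` Op) (open_closedC oO) (fun h => h Ox0).
  pose I := ({K : set X | compact K} * X)%type.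
  pose le := fun a b : I => sval a.1 `<=` sval b.1.
  pose F := fun (i : I) => if pselect (~ sval i.1 i.2) then
     (fun x => 1 - @Urysohn X R [set i.2] (sval i.1) x) else (fun _ => 0).
  have sepK : forall (K : set X) y, compact K -> ~ K y -> uniform_separator [set y] K.
    by move=> K y cK nKy; apply: crs => //; apply: compact_closed.
  have FK : forall i x, sval i.1 x -> F i x = 0.
    move=> [[K cK] y] x /= Kx; rewrite /F /=; case: pselect => //= nKy.
    have -> : @Urysohn X R [set y] K x = 1.
      by apply: (Urysohn_sub1 (sepK _ _ cK nKy)); exists x.
    by rewrite subrr.
  have Fy : forall (K : set X) (cK : compact K) y, ~ K y ->
      F (exist _ K cK, y) y = 1.
    move=> K cK y nKy; rewrite /F /=; case: pselect => //= _.
    have -> : @Urysohn X R [set y] K y = 0.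
      by apply: (Urysohn_sub0 (sepK _ _ cK nKy)); exists y.
    by rewrite subr0.
  have gnn : forall x, 0 <= g x by move=> x; case/andP: (g01 x).
  have dir : directed_set le.
    split.
    + by exists (exist _ set0 compact0, x0).
    + by move=> i.
    + by move=> i j k; apply: subset_trans.
    + move=> [[K1 c1] y1] [[K2 c2] y2].
      exists (exist _ (K1 `|` K2) (compactU c1 c2), x0); split => /=.
      * by move=> z ?; left.
      * by move=> z ?; right.
  have Fc : forall i, continuous (F i).
    move=> [[K cK] y]; rewrite /F /=; case: pselect => ? x.
    * by apply: cvgB; [exact: cvg_cst | exact: Urysohn_continuous].
    * exact: cvg_cst.
  have fc : continuous (fun _ : X => (0:R)) by move=> x; exact: cvg_cst.
  have conv : compact_open_conv le F (fun _ => 0).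
    move=> C cC eps eps0; exists (exist _ C cC, x0) => i Ci x Cx.
    by rewrite FK ?subrr ?normr0 //; exact: Ci.
  have [G [[Gc Gpos Ginf] Gev]] := Hconv I le F (fun _ => 0) dir Fc fc conv g gc gnn.
  suff gG : forall h, G h -> forall x, g x <= h x.
    by have := Ginf g gc gG x0; rewrite gx0 ler10.
  move=> h Gh x; have [[[K0 cK0] y0] Hev] := Gev h Gh.
  case: (pselect (Op x)) => Ox; last by rewrite gO //; exact: Gpos.
  rewrite leNgt; apply/negP => hx.
  pose P := Op `&` ((fun z => g z - h z) @^-1` [set r | 0 < r]).
  have oP : open P.
    apply: openI => //; apply: open_comp; last exact: open_gt.
    move=> z _; apply: cvgB; [exact: gc | exact: Gc].
  have [z [[Oz gz] nKz]] : exists z, P z /\ ~ K0 z.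
    apply: contrapT => nz.
    have PK : P `<=` K0.
      by move=> z Pz; apply: contrapT => nK; apply: nz; exists z.
    suff : (Op `&` [set x : X | has_compact_nbhd x]) x by rewrite OW.
    split => //; exists K0; split => //.
    apply: (filterS PK); apply: open_nbhs_nbhs; split => //; split => //=.
    by rewrite subr_gt0.
  have := (Hev (exist _ K0 cK0, z) (fun _ h => h) z).2.
  rewrite /= Fy // subr0 normr1 add0r min_r; last by case/andP: (g01 z).
  by move: gz; rewrite /= subr_gt0 => gz; rewrite leNgt gz.
Qed.

Theorem theorem7p4 (R : realType) (X : topologicalType) :
  tychonoff_space X ->
  [/\ (almost_locally_compact X <->
        (exists D : set X, dense D /\ locally_compact_subspace D)),
      (almost_locally_compact X <->
        (forall U : set X, open U -> (U !=set0) ->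
           exists V : set X, [/\ open V, (V !=set0), (V `<=` U) & precompact V])) &
      (almost_locally_compact X <-> compact_open_stronger_than_uo R X)].
Proof.
move=> tX; split; [exact: (@part1 R X tX) | exact: (@part2 X tX.2) | exact: (@part3 R X tX)].
Qed.
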